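(* Let $G$ be a simple graph, not necessarily connected. Then the following are equivalent: (i) $\gamma(G)\le 1$; (ii) $G$ is $\{P_3,2P_2\}$-free, i.e. no induced subgraph of $G$ is isomorphic to the path $P_3$ on three vertices or to the disjoint union $2P_2$ of two edges; (iii) $G$ is the disjoint union of a complete graph and a trivial (edgeless) graph.
   Context: For a finite graph $G$ and indeterminates $X_G=\{x_u : u\in V(G)\}$, the generalized Laplacian matrix $L(G,X_G)$ is the $V(G)\times V(G)$ matrix over $\mathbb{Z}[X_G]$ with $(u,u)$-entry $x_u$ and $(u,v)$-entry $-m_{uv}$ for $u\ne v$, $m_{uv}$ being the number of edges between $u$ and $v$. The $i$-th critical ideal $I_i(G,X_G)$ is the ideal of $\mathbb{Z}[X_G]$ generated by all $i\times i$ minors of $L(G,X_G)$ (with $I_i=\langle1\rangle$ for $i<1$, $I_i=\langle 0\rangle$ for $i>|V(G)|$). The algebraic co-rank $\gamma(G)$ is the number of critical ideals of $G$ equal to $\langle 1\rangle$. *)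

(* Defs.v *)
From HB Require Import structures.
From mathcomp Require Import all_boot all_order all_algebra.
From mathcomp Require Import mpoly.
From Stdlib Require Import ClassicalDescription.
Set Implicit Arguments. Unset Strict Implicit. Unset Printing Implicit Defensive.
Import GRing.Theory.
Local Open Scope ring_scope.

Definition simple_graph (n : nat) (e : rel 'I_n) : Prop :=
  (forall u v, e u v = e v u) /\ (forall u, e u u = false).

(* Generalized Laplacian L(G, X_G) over Z[x_0,...,x_{n-1}]; in a simple graph
   m_uv = 1 if uv is an edge and 0 otherwise. *)
Definition gen_laplacian (n : nat) (e : rel 'I_n) : 'M[{mpoly int[n]}]_n :=
  \matrix_(u, v) (if u == v then 'X_u else - ((e u v)%:R)).

Definition minor (n i : nat) (e : rel 'I_n) (r c : {ffun 'I_i -> 'I_n})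
  : {mpoly int[n]} :=
  \det (\matrix_(a, b) gen_laplacian e (r a) (c b)).

Definition crit_ideal_trivial (n : nat) (e : rel 'I_n) (i : nat) : Prop :=
  exists coef : {ffun {ffun 'I_i -> 'I_n} * {ffun 'I_i -> 'I_n} -> {mpoly int[n]}},
    \sum_(p : {ffun 'I_i -> 'I_n} * {ffun 'I_i -> 'I_n} | injectiveb p.1 && injectiveb p.2) coef p * minor e p.1 p.2 = 1.

Definition pbool (P : Prop) : bool :=
  if excluded_middle_informative P then true else false.

Definition alg_corank (n : nat) (e : rel 'I_n) : nat :=
  #|[set i : 'I_n.+1 | (0 < (i : nat))%N && pbool (crit_ideal_trivial e i) ]|.

Definition has_induced (k n : nat) (h : rel 'I_k) (e : rel 'I_n) : Prop :=
  exists f : 'I_k -> 'I_n, injective f /\ forall x y, e (f x) (f y) = h x y.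

Definition P3 : rel 'I_3 := fun x y =>
  ((x : nat) == 0%N) && ((y : nat) == 1%N) || ((x : nat) == 1%N) && ((y : nat) == 0%N)
  || ((x : nat) == 1%N) && ((y : nat) == 2%N) || ((x : nat) == 2%N) && ((y : nat) == 1%N).

Definition twoP2 : rel 'I_4 := fun x y =>
  ((x : nat) == 0%N) && ((y : nat) == 1%N) || ((x : nat) == 1%N) && ((y : nat) == 0%N)
  || ((x : nat) == 2%N) && ((y : nat) == 3%N) || ((x : nat) == 3%N) && ((y : nat) == 2%N).

Definition complete_plus_trivial (n : nat) (e : rel 'I_n) : Prop :=
  exists K : {set 'I_n}, forall u v, e u v = [&& u != v, u \in K & v \in K].

(* Main.v *)
Require Import Defs.
From HB Require Import structures.
From mathcomp Require Import all_boot all_order all_algebra.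
From mathcomp Require Import mpoly.
Set Implicit Arguments. Unset Strict Implicit. Unset Printing Implicit Defensive.
Import GRing.Theory.
Local Open Scope ring_scope.

Lemma pboolP (P : Prop) : pbool P = true <-> P.
Proof. by rewrite /pbool; case: ClassicalDescription.excluded_middle_informative. Qed.

Lemma det2 (R : comNzRingType) (A : 'M[R]_2) : \det A = A 0 0 * A 1 1 - A 0 1 * A 1 0.
Proof.
rewrite (expand_det_row _ ord0) !big_ord_recl big_ord0 /cofactor !det_mx11 /=.
rewrite !mxE /= addr0 expr0 expr1 mul1r mulN1r mulrN.
by congr (A _ _ * A _ _ - A _ _ * A _ _); apply: val_inj.
Qed.

Lemma det_rank1 k (A : 'M[int]_k.+2) (s t : 'I_k.+2 -> bool) :
  (forall a b, A a b = - ((s a && t b)%:R)) -> \det A = 0.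
Proof.
move=> HA.
have zrow i : s i = false -> \det A = 0.
  by move=> si; rewrite (expand_det_row _ i) big1 // => j _; rewrite HA si oppr0 mul0r.
case s0: (s ord0); last exact: zrow s0.
case s1: (s (inord 1)); last exact: zrow s1.
apply: (@determinant_alternate _ _ _ ord0 (inord 1)).
  by apply/eqP => /(congr1 (@nat_of_ord _)) /eqP; rewrite /= inordK.
by move=> j; rewrite !HA s0 s1.
Qed.

Section Alg.
Variables (n : nat) (e : rel 'I_n).

Lemma triv_of_minor i (r c : {ffun 'I_i -> 'I_n}) : injectiveb r -> injectiveb c ->
  minor e r c * minor e r c = 1 -> crit_ideal_trivial e i.
Proof.
move=> ir ic H.
exists [ffun p => if p == (r, c) then minor e r c else 0].
rewrite (bigD1 (r, c)) /=; last by rewrite ir ic.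
rewrite ffunE eqxx big1 ?addr0 // => p /andP[_ np].
by rewrite ffunE (negbTE np) mul0r.
Qed.

Lemma triv1 u w : e u w -> u != w -> crit_ideal_trivial e 1.
Proof.
move=> euw nuw.
apply: (@triv_of_minor 1 [ffun _ => u] [ffun _ => w]).
- by apply/injectiveP => x y _; rewrite !ord1.
- by apply/injectiveP => x y _; rewrite !ord1.
rewrite /minor det_mx11 !mxE !ffunE (negbTE nuw) euw /=.
by rewrite mulrNN mulr1.
Qed.

Lemma triv2 a0 a1 b0 b1 : a0 != a1 -> b0 != b1 ->
  let L := gen_laplacian e in
  (L a0 b0 * L a1 b1 - L a0 b1 * L a1 b0) ^+ 2 = 1 -> crit_ideal_trivial e 2.
Proof.
move=> na nb L H.
apply: (@triv_of_minor 2 [ffun x : 'I_2 => nth a0 [:: a0; a1] x]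
                         [ffun x : 'I_2 => nth b0 [:: b0; b1] x]).
- apply/injectiveP => x y; rewrite !ffunE => /eqP; rewrite nth_uniq //=.
    by move=> /eqP /val_inj.
  by rewrite inE andbT.
- apply/injectiveP => x y; rewrite !ffunE => /eqP; rewrite nth_uniq //=.
    by move=> /eqP /val_inj.
  by rewrite inE andbT.
by move: H; rewrite /L /minor det2 !mxE !ffunE /= -expr2.
Qed.

Variable K : {set 'I_n}.
Hypothesis HK : forall u v, e u v = [&& u != v, u \in K & v \in K].

Definition vK (u : 'I_n) : int := if u \in K then -1 else 0.

Lemma meval_L u w : meval vK (gen_laplacian e u w) = - (((u \in K) && (w \in K))%:R).
Proof.
rewrite /gen_laplacian mxE; case: eqVneq => [<-|nuw].
  by rewrite mevalXU /vK andbb; case: (u \in K) => //=; rewrite oppr0.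
by rewrite rmorphN rmorph_nat HK nuw.
Qed.

Lemma nontriv k : ~ crit_ideal_trivial e k.+2.
Proof.
move=> [coef H].
have := congr1 (meval vK) H; rewrite meval1 rmorph_sum big1 //.
move=> p _; rewrite rmorphM /=.
have -> : meval vK (minor e p.1 p.2) = 0; last by rewrite mulr0.
rewrite /minor -det_map_mx.
apply: (@det_rank1 _ _ (fun a => p.1 a \in K) (fun b => p.2 b \in K)) => a b.
rewrite mxE mxE; exact: meval_L.
Qed.
End Alg.
Section Comb.
Variables (n : nat) (e : rel 'I_n).
Hypothesis sym : forall u v, e u v = e v u.
Hypothesis irr : forall u, e u u = false.

Lemma mkP3 a b c : a != b -> b != c -> a != c ->
  e a b = true -> e b c = true -> e a c = false -> has_induced P3 e.
Proof.
move=> nab nbc nac eab ebc eac.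
exists (fun x : 'I_3 => nth a [:: a; b; c] x); split.
  move=> x y /eqP; rewrite nth_uniq //=; last first.
    by rewrite !inE negb_or nab nac nbc.
  by move=> /eqP /val_inj.
move=> [[|[|[|?]]] ?] [[|[|[|?]]] ?] //=; rewrite /P3 /= ?irr //;
  by rewrite ?eab ?ebc ?eac // sym ?eab ?ebc ?eac.
Qed.

Lemma mk2P2 a b c d : uniq [:: a; b; c; d] ->
  e a b = true -> e c d = true -> e a c = false -> e a d = false ->
  e b c = false -> e b d = false -> has_induced twoP2 e.
Proof.
move=> U eab ecd eac ead ebc ebd.
exists (fun x : 'I_4 => nth a [:: a; b; c; d] x); split.
  move=> x y /eqP; rewrite nth_uniq //=.
  by move=> /eqP /val_inj.
move=> [[|[|[|[|?]]]] ?] [[|[|[|[|?]]]] ?] //=; rewrite /twoP2 /= ?irr //;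
  by rewrite ?eab ?ecd ?eac ?ead ?ebc ?ebd // sym ?eab ?ecd ?eac ?ead ?ebc ?ebd.
Qed.

Lemma cpt_free : complete_plus_trivial e -> ~ has_induced P3 e /\ ~ has_induced twoP2 e.
Proof.
move=> [K HK]; split.
  move=> [f [injf Hf]].
  have h01 := Hf (inord 0) (inord 1); have h12 := Hf (inord 1) (inord 2);
  have h02 := Hf (inord 0) (inord 2).
  rewrite /P3 !inordK // /= !HK in h01 h12 h02.
  move: h01 h12 h02 => /andP[_ /andP[-> ->]] /andP[_ /andP[_ ->]].
  rewrite !andbT => /negbFE /eqP /injf /(congr1 (@nat_of_ord _)) /eqP; rewrite !inordK //.
move=> [f [injf Hf]].
have h01 := Hf (inord 0) (inord 1); have h23 := Hf (inord 2) (inord 3);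
have h02 := Hf (inord 0) (inord 2).
rewrite /twoP2 !inordK // /= !HK in h01 h23 h02.
move: h01 h23 h02 => /andP[_ /andP[-> _]] /andP[_ /andP[-> _]].
rewrite !andbT => /negbFE /eqP /injf /(congr1 (@nat_of_ord _)) /eqP; rewrite !inordK //.
Qed.

Lemma free_cpt : ~ has_induced P3 e -> ~ has_induced twoP2 e -> complete_plus_trivial e.
Proof.
move=> nP3 n2P2.
exists [set u | [exists v, e u v]] => u v; rewrite !inE.
case euv: (e u v).
  have nuv : u != v by apply: contraT => /negbNE /eqP uv; rewrite uv irr in euv.
  by rewrite nuv /=; apply/esym/andP; split; apply/existsP; [exists v | exists u; rewrite sym].
case: (eqVneq u v) => //= nuv.
case: (boolP [exists v, e u v]) => //= /existsP [a eua].
case: (boolP [exists w, e v w]) => //= /existsP [b evb].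
exfalso.
have nua : u != a by apply: contraTneq eua => ->; rewrite irr.
have nvb : v != b by apply: contraTneq evb => ->; rewrite irr.
have nav : a != v by apply: contraFneq euv => <-.
have nbu : b != u by apply: contraFneq euv => <-; rewrite sym.
case eub: (e u b).
  by apply: nP3; apply: (@mkP3 v b u) => //; rewrite ?(eq_sym v u) ?(sym b u) ?(sym v u).
case eva: (e v a).
  by apply: nP3; apply: (@mkP3 u a v) => //; rewrite ?(sym a v).
case: (eqVneq a b) => [eab|nab].
  by subst b; apply: nP3; apply: (@mkP3 u a v) => //; rewrite ?(sym a v).
case eab: (e a b).
  by apply: nP3; apply: (@mkP3 u a b) => //; rewrite ?(eq_sym u b).
apply: n2P2; apply: (@mk2P2 u a v b) => //; rewrite ?(sym a v) //.
rewrite /= !inE !negb_or nua nuv (eq_sym u b) nbu nav nab nvb //.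
Qed.
End Comb.

Lemma ord_neq m (i j : nat) : (i < m.+1)%N -> (j < m.+1)%N -> i != j ->
  (inord i : 'I_m.+1) != inord j.
Proof.
by move=> hi hj nij; apply/eqP => /(congr1 (@nat_of_ord _)); rewrite !inordK //; apply/eqP.
Qed.

Lemma ge2 n (e : rel 'I_n) : simple_graph e ->
  has_induced P3 e \/ has_induced twoP2 e -> (1 < alg_corank e)%N.
Proof.
move=> [sym irr] Hind.
have [n3 T1 T2] : [/\ (2 < n)%N, crit_ideal_trivial e 1 & crit_ideal_trivial e 2].
  case: Hind => [[f [injf Hf]]|[f [injf Hf]]].
    have n3 := leq_card f injf; rewrite !card_ord in n3.
    have Hn : forall i j, (i < 3)%N -> (j < 3)%N -> i != j -> f (inord i) != f (inord j).
      by move=> i j hi hj nij; rewrite (inj_eq injf); apply: ord_neq.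
    have e01 : e (f (inord 0)) (f (inord 1)) = true by rewrite Hf /P3 !inordK.
    have e12 : e (f (inord 1)) (f (inord 2)) = true by rewrite Hf /P3 !inordK.
    have e02 : e (f (inord 0)) (f (inord 2)) = false by rewrite Hf /P3 !inordK.
    split => //; first by apply: (triv1 e01); apply: Hn.
    apply: (@triv2 _ _ (f (inord 0)) (f (inord 1)) (f (inord 1)) (f (inord 2))); try by apply: Hn.
    rewrite /gen_laplacian !mxE eqxx (negbTE (Hn 0 1 isT isT isT)) (negbTE (Hn 1 2 isT isT isT)) (negbTE (Hn 0 2 isT isT isT)) e01 e12 e02 /=.
    by rewrite ?mulr1n ?mulr0n ?oppr0 mulrNN mulr1 mul0r subr0 expr1n.
  have n3 := leq_card f injf; rewrite !card_ord in n3.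
  have Hn : forall i j, (i < 4)%N -> (j < 4)%N -> i != j -> f (inord i) != f (inord j).
    by move=> i j hi hj nij; rewrite (inj_eq injf); apply: ord_neq.
  have e01 : e (f (inord 0)) (f (inord 1)) = true by rewrite Hf /twoP2 !inordK.
  have e23 : e (f (inord 2)) (f (inord 3)) = true by rewrite Hf /twoP2 !inordK.
  have e03 : e (f (inord 0)) (f (inord 3)) = false by rewrite Hf /twoP2 !inordK.
  have e21 : e (f (inord 2)) (f (inord 1)) = false by rewrite Hf /twoP2 !inordK.
  split => //; first by apply: leq_trans n3.
    by apply: (triv1 e01); apply: Hn.
  apply: (@triv2 _ _ (f (inord 0)) (f (inord 2)) (f (inord 1)) (f (inord 3))); try by apply: Hn.
  rewrite /gen_laplacian !mxE (negbTE (Hn 0 1 isT isT isT)) (negbTE (Hn 2 3 isT isT isT)) (negbTE (Hn 0 3 isT isT isT)) (negbTE (Hn 2 1 isT isT isT)) e01 e23 e03 e21 /=.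
  by rewrite ?mulr1n ?mulr0n ?oppr0 mulrNN mulr1 mul0r subr0 expr1n.
rewrite /alg_corank.
have sub : [set (inord 1 : 'I_n.+1); inord 2] \subset
   [set i : 'I_n.+1 | (0 < (i : nat))%N && pbool (crit_ideal_trivial e i)].
  have n2 : (2 < n.+1)%N by rewrite ltnS ltnW.
  have n1 : (1 < n.+1)%N by rewrite ltnS ltnW // ltnW.
  apply/subsetP => i; rewrite !inE => /orP[]/eqP ->; rewrite inordK //=;
    by apply/pboolP.
apply: leq_trans (subset_leq_card sub); rewrite cards2 ord_neq //.
  by rewrite ltnS ltnW // ltnW.
by rewrite ltnS ltnW.
Qed.

Lemma le1 n (e : rel 'I_n) : complete_plus_trivial e -> (alg_corank e <= 1)%N.
Proof.
move=> [K HK]; rewrite /alg_corank.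
apply: leq_trans (subset_leq_card (B := [set (inord 1 : 'I_n.+1)]) _) _; last by rewrite cards1.
apply/subsetP => i; rewrite !inE; case: i => [[|[|k]] Hk] //= /pboolP Ht.
  by apply/eqP/val_inj; rewrite /= inordK.
by case: (nontriv HK Ht).
Qed.

Theorem corollary3p6 (n : nat) (e : rel 'I_n) :
  simple_graph e ->
  [/\ ((alg_corank e <= 1)%N <-> ~ has_induced P3 e /\ ~ has_induced twoP2 e),
      (~ has_induced P3 e /\ ~ has_induced twoP2 e <-> complete_plus_trivial e) &
      ((alg_corank e <= 1)%N <-> complete_plus_trivial e)].
Proof.
move=> G; have [sym irr] := G.
have E1 : ~ has_induced P3 e /\ ~ has_induced twoP2 e <-> complete_plus_trivial e.
  split; first by move=> [h1 h2]; apply: free_cpt.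
  exact: cpt_free.
have E2 : (alg_corank e <= 1)%N <-> complete_plus_trivial e.
  split; last exact: le1.
  move=> Hle; apply: free_cpt => // H.
    by have := ge2 G (or_introl H); rewrite ltnNge Hle.
  by have := ge2 G (or_intror H); rewrite ltnNge Hle.
by split => //; rewrite E2 E1.
Qed.
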